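(* Let $\mathsf V$ be a variety. If $\mathsf V$ has unitary e-generalization $2$-type, then $\mathsf V$ has unitary e-generalization type.
   Context: Let $\mathsf V$ be a variety of algebras of a fixed type. For a set $X$, $\mathbf F_{\mathsf V}(X)$ denotes the free algebra of $\mathsf V$ over $X$; its elements are called terms (terms are identified up to the equational theory of $\mathsf V$). A substitution is a homomorphism between free algebras of $\mathsf V$. A symbolic e-generalization problem for $\mathsf V$ is a finite multiset $\mathbf t=\{t_1,\dots,t_m\}$ ($m\ge 1$) of elements of $\mathbf F_{\mathsf V}(X)$ for some finite $X$. A solution (generalizer) of $\mathbf t$ is a term $s\in\mathbf F_{\mathsf V}(Y)$, where $Y$ is the set of variables of $s$, such that there exist substitutions $\sigma_1,\dots,\sigma_m$ with $\sigma_k(s)=t_k$ in $\mathsf V$ for all $k$. For terms $s,u$ write $s\preceq u$ ($s$ is less general than $u$) iff there is a substitution $\sigma$ with $\sigma(u)=s$; this is a preorder on the set of solutions of $\mathbf t$, and $(\mathscr S(\mathbf t),\preceq)$ denotes the associated poset of classes of equally general solutions. In a poset $(P,\le)$ a minimal complete set is a subset $M\subseteq P$ such that every $p\in P$ has some $a\in M$ with $a\le p$, and no two distinct elements of $M$ are comparable. The e-generalization type of $\mathbf t$ is unitary if $(\mathscr S(\mathbf t),\preceq)$ has a minimal complete set of cardinality 1, finitary if it has one of finite cardinality greater than 1, infinitary if it has one of infinite cardinality, and nullary if it has none. For $m\in\mathbb N\setminus\{0\}$, the e-generalization $m$-type of $\mathsf V$ is the worst type occurring among problems for $\mathsf V$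 whose multiset has cardinality at most $m$, where the order from best to worst is unitary $>$ finitary $>$ infinitary $>$ nullary; the e-generalization type of $\mathsf V$ is the worst type among all its problems. *)

(* Defs.v *)
From mathcomp Require Import all_boot.
From Stdlib Require List.

Set Implicit Arguments.
Unset Strict Implicit.
Unset Printing Implicit Defensive.

Inductive term (op : Type) (ar : op -> nat) (X : Type) : Type :=
  | Var : X -> term ar X
  | App : forall f : op, ('I_(ar f) -> term ar X) -> term ar X.

Arguments Var {op ar X} x.
Arguments App {op ar X} f args.

(* Every homomorphism F(X) -> F(Y) between free algebras is of this    *)
(* form (it is determined by the images of the free generators).       *)
Fixpoint tsubst {op : Type} {ar : op -> nat} {X Y : Type}
  (sigma : X -> term ar Y) (t : term ar X) : term ar Y :=
  match t with
  | Var x => sigma x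
  | App f a => App f (fun i => tsubst sigma (a i))
  end.

(* A variety, given (Birkhoff) by its type and a set of defining        *)
Record variety := Variety {
  v_op : Type;
  v_ar : v_op -> nat;
  v_ax : term v_ar nat -> term v_ar nat -> Prop }.

Definition vterm (V : variety) (X : Type) := term (@v_ar V) X.

(* Equational theory of V on terms over X: the fully invariant           *)
(* congruence generated by the identities.  [veq V s t] means that        *)
(* s = t holds in the free algebra F_V(X).                               *)
Inductive veq (V : variety) (X : Type) : vterm V X -> vterm V X -> Prop :=
  | veq_ax : forall l r (sigma : nat -> vterm V X),
      v_ax l r -> veq (tsubst sigma l) (tsubst sigma r)
  | veq_refl : forall t, veq t t
  | veq_sym : forall s t, veq s t -> veq t s
  | veq_trans : forall s t u, veq s t -> veq t u -> veq s u
  | veq_cong : forall (f : v_op V) (a b : 'I_(v_ar f) -> vterm V X),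
      (forall i, veq (a i) (b i)) -> veq (App f a) (App f b).

(* A problem is a finite multiset (here: a nonempty list, order being  *)
(* irrelevant) of terms over a finite set X of variables.  Generalizers *)
(* are terms over the countable variable supply nat (every term has     *)
(* finitely many variables, so its variable set Y embeds into nat).     *)
Definition is_generalizer (V : variety) (X : finType) (t : seq (vterm V X))
  (s : vterm V nat) : Prop :=
  forall u, List.In u t -> exists sigma : nat -> vterm V X, veq (tsubst sigma s) u.

Definition less_general (V : variety) (s u : vterm V nat) : Prop :=
  exists sigma : nat -> vterm V nat, veq (tsubst sigma u) s.

(* Minimal complete set of the poset of classes of solutions, given by   *)
(* one representative per class: complete, and any comparability        *)
(* between members forces equality (so distinct members lie in distinct, *)
(* incomparable classes; the cardinality of M is that of the set of      *)
(* classes it represents).                                               *)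
Definition min_complete_set (V : variety) (X : finType) (t : seq (vterm V X))
  (M : vterm V nat -> Prop) : Prop :=
  (forall a, M a -> is_generalizer t a) /\
  (forall p, is_generalizer t p -> exists2 a, M a & less_general a p) /\
  (forall a b, M a -> M b -> less_general a b -> a = b).

Inductive gtype := Nullary | Infinitary | Finitary | Unitary.

(* order from worst (0) to best (3) *)
Definition gtype_rank (g : gtype) : nat :=
  match g with Nullary => 0 | Infinitary => 1 | Finitary => 2 | Unitary => 3 end.

Definition set_card_one {T : Type} (M : T -> Prop) : Prop :=
  exists a, forall b, M b <-> b = a.

Definition set_finite_card_gt1 {T : Type} (M : T -> Prop) : Prop :=
  exists l : list T, List.NoDup l /\ (1 < length l)%coq_nat /\ (forall b, M b <-> List.In b l).

Definition set_infinite {T : Type} (M : T -> Prop) : Prop :=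
  ~ exists l : list T, forall b, M b -> List.In b l.

Definition has_gtype (V : variety) (X : finType) (t : seq (vterm V X))
  (g : gtype) : Prop :=
  match g with
  | Unitary => exists M, min_complete_set t M /\ set_card_one M
  | Finitary => exists M, min_complete_set t M /\ set_finite_card_gt1 M
  | Infinitary => exists M, min_complete_set t M /\ set_infinite M
  | Nullary => ~ exists M, min_complete_set t M
  end.

Definition worst_gtype (V : variety) (sz : nat -> Prop) (g : gtype) : Prop :=
  (exists (X : finType) (t : seq (vterm V X)), sz (size t) /\ has_gtype t g) /\
  (forall (X : finType) (t : seq (vterm V X)) (g' : gtype),
      sz (size t) -> has_gtype t g' -> gtype_rank g <= gtype_rank g').

Definition egen_mtype (V : variety) (m : nat) (g : gtype) : Prop :=
  worst_gtype V (fun k => 0 < k <= m) g.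

Definition egen_type (V : variety) (g : gtype) : Prop :=
  worst_gtype V (fun k => 0 < k) g.

(* Main.v *)
Require Import Defs.
From mathcomp Require Import all_boot.
From Stdlib Require Import ClassicalEpsilon Classical FunctionalExtensionality Lia.
From Stdlib Require List.

Set Implicit Arguments.
Unset Strict Implicit.

Lemma tsubst_comp (op : Type) (ar : op -> nat) (X Y Z : Type)
  (s1 : X -> term ar Y) (s2 : Y -> term ar Z) s :
  tsubst s2 (tsubst s1 s) = tsubst (fun x => tsubst s2 (s1 x)) s.
Proof.
elim: s => [x|f a IH] //=. congr (App f _).
apply: functional_extensionality => i. exact: IH.
Qed.

Lemma tsubst_var (op : Type) (ar : op -> nat) (X : Type) (s : term ar X) :
  tsubst (fun x => Var x) s = s.
Proof.
elim: s => [x|f a IH] //=. congr (App f _).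
apply: functional_extensionality => i. exact: IH.
Qed.

Lemma veq_subst (V : variety) (X Y : Type) (r : X -> vterm V Y) s t :
  veq s t -> veq (tsubst r s) (tsubst r t).
Proof.
elim => {s t} [l q sg Hax| t | s t _ IH | s t u _ IH1 _ IH2 | f a b _ IH] /=.
- rewrite !tsubst_comp. exact: veq_ax.
- exact: veq_refl.
- exact: veq_sym.
- exact: veq_trans IH1 IH2.
- apply: veq_cong => i; exact: IH.
Qed.

Inductive vars_lt (op : Type) (ar : op -> nat) (n : nat) : term ar nat -> Prop :=
 | vl_var : forall k, k < n -> vars_lt n (Var k)
 | vl_app : forall f a, (forall i, vars_lt n (a i)) -> vars_lt n (App f a).

Lemma vars_lt_mono (op : Type) (ar : op -> nat) m n (t : term ar nat) :
  m <= n -> vars_lt m t -> vars_lt n t.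
Proof.
move=> Hmn; elim => {t} [k Hk|f a _ IH].
- apply: vl_var; exact: leq_trans Hk Hmn.
- exact: vl_app.
Qed.

Lemma fin_bound (I : finType) (P : I -> nat -> Prop) :
  (forall i m n, m <= n -> P i m -> P i n) -> (forall i, exists n, P i n) ->
  exists n, forall i, P i n.
Proof.
move=> Hm H.
suff Hs : forall s : seq I, exists n, forall i, i \in s -> P i n.
  have [n Hn] := Hs (enum I).
  by exists n => i; apply: Hn; rewrite mem_enum.
move=> s; elim: s => [|x s [n1 IH]]; first by exists 0.
have [n2 H2] := H x.
exists (maxn n1 n2) => i; rewrite in_cons; case: eqP => [->|_] /= Hi.
- apply: Hm H2; exact: leq_maxr.
- apply: Hm (IH _ Hi); exact: leq_maxl.
Qed.

Lemma vars_exists (op : Type) (ar : op -> nat) (t : term ar nat) :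
  exists n, vars_lt n t.
Proof.
elim: t => [k|f a IH]; first by exists k.+1; apply: vl_var.
have [n Hn] := @fin_bound _ (fun i n => vars_lt n (a i))
   (fun i m n H => vars_lt_mono H) IH.
by exists n; apply: vl_app.
Qed.

Lemma tsubst_ext (op : Type) (ar : op -> nat) (Y : Type) n (t : term ar nat)
  (s1 s2 : nat -> term ar Y) :
  vars_lt n t -> (forall k, k < n -> s1 k = s2 k) -> tsubst s1 t = tsubst s2 t.
Proof.
move=> Hv He; elim: Hv => {t} [k Hk|f a _ IH] /=; first exact: He.
congr (App f _); apply: functional_extensionality => i; exact: IH.
Qed.

Definition gen_least (V : variety) (X : finType) (t : seq (vterm V X)) a :=
  is_generalizer t a /\ forall p, is_generalizer t p -> less_general a p.

Lemma step (V : variety) (X : finType) (u : vterm V X) t' a :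
  gen_least t' a ->
  (forall (Y : finType) (s : seq (vterm V Y)), size s = 2 -> exists b, gen_least s b) ->
  exists b, gen_least (u :: t') b.
Proof.
move=> [Ha Hl] H2.
have [n Hn] := vars_exists a.
pose ren := fun k : nat => (Var (inl (inord k)) : vterm V ('I_n.+1 + X)%type).
pose a' := tsubst ren a.
pose u' := tsubst (fun x => (Var (inr x) : vterm V ('I_n.+1 + X)%type)) u.
have [b [Hb Hbl]] := H2 _ [:: a'; u'] erefl.
exists b; split.
- move=> w /= [<-|Hw].
  + have [sg Hsg] := Hb u' (or_intror (or_introl erefl)).
    pose rho := fun y : ('I_n.+1 + X)%type =>
      match y with inl _ => u | inr x => Var x end.
    exists (fun k => tsubst rho (sg k)).
    have := veq_subst rho Hsg.
    by rewrite tsubst_comp /u' tsubst_comp /= tsubst_var.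
  + have [tau Htau] := Ha w Hw.
    have [sg Hsg] := Hb a' (or_introl erefl).
    pose rho := fun y : ('I_n.+1 + X)%type =>
      match y with inl i => tau (val i) | inr x => Var x end.
    exists (fun k => tsubst rho (sg k)).
    have := veq_subst rho Hsg; rewrite tsubst_comp => H.
    apply: veq_trans H _.
    have -> : tsubst rho a' = tsubst tau a.
      rewrite /a' tsubst_comp; apply: (tsubst_ext Hn) => k Hk /=.
      by rewrite inordK // ltnS ltnW.
    exact: Htau.
- move=> p Hp.
  have Hp' : is_generalizer t' p by move=> w Hw; apply: Hp; right.
  have [sg Hsg] := Hl p Hp'.
  apply: Hbl => w /= [<-|[<-|[]]].
  + exists (fun k => tsubst ren (sg k)).
    have := veq_subst ren Hsg; by rewrite tsubst_comp.
  + have [tau Htau] := Hp u (or_introl erefl).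
    exists (fun k => tsubst (fun x => (Var (inr x) : vterm V ('I_n.+1 + X)%type)) (tau k)).
    have := veq_subst (fun x => (Var (inr x) : vterm V ('I_n.+1 + X)%type)) Htau.
    by rewrite tsubst_comp.
Qed.

Lemma var_gen (V : variety) (X : finType) (t : seq (vterm V X)) :
  is_generalizer t (Var 0).
Proof. move=> u _; exists (fun _ => u); exact: veq_refl. Qed.

Lemma from_hyp (V : variety) : egen_mtype V 2 Unitary ->
  forall (X : finType) (t : seq (vterm V X)), 0 < size t <= 2 ->
  exists a, gen_least t a.
Proof.
move=> [_ H] X t Hs.
have HN := H X t Nullary Hs.
have [M HM] : exists M, min_complete_set t M.
  apply: NNPP => C; by have := HN C.
have HI := H X t Infinitary Hs.
have HF := H X t Finitary Hs.
have [l Hl] : exists l : list (vterm V nat), forall b, M b -> List.In b l.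
  apply: NNPP => C; by have := HI (ex_intro _ M (conj HM C)).
have [Hg [Hc Ha]] := HM.
have [b Mb _] := Hc _ (@var_gen V X t).
have Huniq : forall c, M c -> c = b.
  move=> c Mc; apply: NNPP => Hne.
  pose fm := fun x => if excluded_middle_informative (M x) then true else false.
  pose dec := fun x y : vterm V nat => excluded_middle_informative (x = y).
  pose l' := List.nodup dec (List.filter fm l).
  have Hin : forall x, M x <-> List.In x l'.
    move=> x; rewrite /l' List.nodup_In List.filter_In /fm.
    case: excluded_middle_informative => Hx; split => //.
    + by move=> _; split => //; apply: Hl.
    + by case.
  suff: has_gtype t Finitary by move/HF.
  exists M; split => //; exists l'; split; first exact: List.NoDup_nodup.
  split; last exact: Hin.
  move: (proj1 (Hin _) Mb) (proj1 (Hin _) Mc).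
  case: l' Hin => [|x [|y r]] Hin /=.
  - by case.
  - by move=> [Eb|[]] [Ec|[]]; exfalso; apply: Hne; rewrite -Eb -Ec.
  - move=> _ _; lia.
exists b; split; first exact: Hg.
move=> p Hp; have [c Mc Hcp] := Hc p Hp; by rewrite -(Huniq c Mc).
Qed.

Lemma all_least (V : variety) : egen_mtype V 2 Unitary ->
  forall (X : finType) (t : seq (vterm V X)), 0 < size t ->
  exists a, gen_least t a.
Proof.
move=> H X t; elim: t => [|u t' IH] //= _.
case: t' IH => [|w t''] IH; first by apply: from_hyp.
have [a Ha] := IH erefl.
apply: step Ha _ => Y s Hs; apply: from_hyp => //; by rewrite Hs.
Qed.

Lemma lg_trans (V : variety) (a b c : vterm V nat) :
  less_general a b -> less_general b c -> less_general a c.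
Proof.
move=> [s1 H1] [s2 H2]; exists (fun k => tsubst s1 (s2 k)).
rewrite -tsubst_comp; apply: veq_trans (veq_subst s1 H2) H1.
Qed.

Theorem proposition2p7 (V : variety) :
  egen_mtype V 2 Unitary -> egen_type V Unitary.
Proof.
move=> H; split.
  have [[X [t [Hs Ht]]] _] := H.
  exists X, t; split => //; by case/andP: Hs.
move=> X t g Hs Hg.
have [a [Ha Hal]] := all_least H Hs.
have single : forall M, min_complete_set t M -> exists b, forall c, M c -> c = b.
  move=> M [Hg' [Hc Han]].
  have [b Mb Hba] := Hc _ Ha.
  exists b => c Mc; symmetry; apply: Han => //.
  exact: lg_trans Hba (Hal _ (Hg' _ Mc)).
case: g Hg => //=.
- move=> C; exfalso; apply: C; exists (fun b => b = a); split; first by move=> b ->.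
  split; first by move=> p Hp; exists a => //; apply: Hal.
  by move=> x y -> ->.
- move=> [M [HM C]]; exfalso; apply: C.
  have [b Hb] := single M HM; exists [:: b] => c Mc; left; by rewrite (Hb c Mc).
- move=> [M [HM [l [Hnd [Hlen Hin]]]]]; exfalso.
  have [b Hb] := single M HM.
  case: l Hnd Hlen Hin => [|x [|y r]] Hnd Hlen Hin /=; try (simpl in Hlen; lia).
  have Ex := Hb x (proj2 (Hin x) (or_introl erefl)).
  have Ey := Hb y (proj2 (Hin y) (or_intror (or_introl erefl))).
  move: Hnd; rewrite Ex Ey => /List.NoDup_cons_iff [H1 _]; apply: H1; by left.
Qed.
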